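(* Let $B=(L,R,\omega,\lambda,\rho)$ be a bimachine defining a total function $f:\Sigma^\ast\to\Sigma^\ast$. Then $\sim_L\sqsubseteq\sim_{L_0}$ and $\sim_R\sqsubseteq\sim_{R_0}$.
   Context: A bimachine is $B=(L,R,\omega,\lambda,\rho)$ with $L$ a deterministic left automaton (initial state $l_0$), $R$ a deterministic right automaton reading right to left (initial state $r_0$), $\omega:L\times\Sigma\times R\to\Sigma^\ast$ partial, $\rho:L\to\Sigma^\ast$, $\lambda:R\to\Sigma^\ast$ partial. For $u=\sigma_1\cdots\sigma_n$ with runs $l_0\xrightarrow{\sigma_1}l_1\cdots\xrightarrow{\sigma_n}l_n$ and $r_n\xleftarrow{\sigma_1}r_{n-1}\cdots r_1\xleftarrow{\sigma_n}r_0$, $[\![B]\!](u)=\lambda(r_n)\prod_{i=1}^n\omega(l_{i-1},\sigma_i,r_{n-i})\,\rho(l_n)$ when everything is defined. For a deterministic left (resp. right) automaton $A$ with initial state $q_0$, $u\sim_A v$ iff for every state $p$, $A$ reaches $p$ from $q_0$ reading $u$ (resp. reading $u$ from right to left) iff it does so reading $v$. For equivalences, $\sim_1\sqsubseteq\sim_2$ means $u\sim_1v\Rightarrow u\sim_2 v$. Let $u\wedge v$ be the longest common prefix and $u\vee v$ the longest common suffix of $u,v$; left distance $\lVert u,v\rVert=|u|+|v|-2|u\wedge v|$, right distance $\lVert u,v\rVert_r=|u|+|v|-2|u\vee v|$. $u\sim_{R_0}v$ iff for all $w$, $wu\in\mathrm{dom}(f)\Leftrightarrow wv\in\mathrm{dom}(f)$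 and $\sup_w\lVert f(wu),f(wv)\rVert<\infty$ (over $w$ with $wu\in\mathrm{dom} f$). Symmetrically $u\sim_{L_0}v$ iff for all $w$, $uw\in\mathrm{dom}(f)\Leftrightarrow vw\in\mathrm{dom}(f)$ and $\sup_w\lVert f(uw),f(vw)\rVert_r<\infty$. *)

(* Defs.v *)
From mathcomp Require Import all_boot.
Set Implicit Arguments. Unset Strict Implicit. Unset Printing Implicit Defensive.

Record bimachine (S : finType) := Bimachine {
  LQ : finType;  l0 : LQ;  dL : LQ -> S -> option LQ;
  RQ : finType;  r0 : RQ;  dR : RQ -> S -> option RQ;
  omega : LQ -> S -> RQ -> option (seq S);
  rho : LQ -> seq S;
  lambda : RQ -> option (seq S)
}.
Arguments l0 {S} b.  Arguments dL {S} b.  Arguments r0 {S} b.  Arguments dR {S} b.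
Arguments omega {S} b.  Arguments rho {S} b.  Arguments lambda {S} b.

Definition lrun (Q S : Type) (d : Q -> S -> option Q) (q0 : Q) (u : seq S) : option Q :=
  foldl (fun oq a => obind (fun q => d q a) oq) (Some q0) u.

Definition rrun (Q S : Type) (d : Q -> S -> option Q) (q0 : Q) (u : seq S) : option Q :=
  foldr (fun a oq => obind (fun q => d q a) oq) (Some q0) u.

Definition optcat (S : Type) (a b : option (seq S)) : option (seq S) :=
  match a, b with Some x, Some y => Some (x ++ y) | _, _ => None end.

(* the i-th (0-based) output block: omega(l_i, sigma_{i+1}, r_{n-i-1}) *)
Definition block (S : finType) (B : bimachine S) (u : seq S) (i : nat) : option (seq S) :=
  match drop i u with
  | a :: rest =>
      match lrun (dL B) (l0 B) (take i u), rrun (dR B) (r0 B) rest with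
      | Some l, Some r => omega B l a r
      | _, _ => None
      end
  | [::] => None
  end.

(* [[B]](u) = lambda(r_n) * prod_i omega(l_{i-1},sigma_i,r_{n-i}) * rho(l_n) *)
Definition bsem (S : finType) (B : bimachine S) (u : seq S) : option (seq S) :=
  optcat (obind (lambda B) (rrun (dR B) (r0 B) u))
    (optcat (foldr (@optcat S) (Some [::]) [seq block B u i | i <- iota 0 (size u)])
            (omap (rho B) (lrun (dL B) (l0 B) u))).

Definition left_equiv (Q S : Type) (d : Q -> S -> option Q) (q0 : Q) (u v : seq S) : Prop :=
  forall p : Q, lrun d q0 u = Some p <-> lrun d q0 v = Some p.
Definition right_equiv (Q S : Type) (d : Q -> S -> option Q) (q0 : Q) (u v : seq S) : Prop :=
  forall p : Q, rrun d q0 u = Some p <-> rrun d q0 v = Some p.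

Definition refines (T : Type) (e1 e2 : T -> T -> Prop) : Prop :=
  forall u v, e1 u v -> e2 u v.

Fixpoint lcp_len (S : eqType) (u v : seq S) : nat :=
  match u, v with
  | a :: u', b :: v' => if a == b then (lcp_len u' v').+1 else 0
  | _, _ => 0
  end.
Definition lcs_len (S : eqType) (u v : seq S) : nat := lcp_len (rev u) (rev v).
Definition ldist (S : eqType) (u v : seq S) : nat := size u + size v - 2 * lcp_len u v.
Definition rdist (S : eqType) (u v : seq S) : nat := size u + size v - 2 * lcs_len u v.

(* f is a partial function Sigma* -> Sigma*, dom f = {w | f w <> None} *)
Definition R0_equiv (S : eqType) (f : seq S -> option (seq S)) (u v : seq S) : Prop :=
  (forall w, f (w ++ u) <> None <-> f (w ++ v) <> None) /\
  exists K : nat, forall w x y, f (w ++ u) = Some x -> f (w ++ v) = Some y -> ldist x y <= K.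

Definition L0_equiv (S : eqType) (f : seq S -> option (seq S)) (u v : seq S) : Prop :=
  (forall w, f (u ++ w) <> None <-> f (v ++ w) <> None) /\
  exists K : nat, forall w x y, f (u ++ w) = Some x -> f (v ++ w) = Some y -> rdist x y <= K.

(* Main.v *)
Require Import Defs.
From mathcomp Require Import all_boot.
From mathcomp Require Import zify.

Section Aux.
Variable S : finType.
Variable B : bimachine S.

Definition Mw := \max_(t : (LQ B * S * RQ B)%type) size (odflt [::] (omega B t.1.1 t.1.2 t.2)).
Definition Ml := \max_(r : RQ B) size (odflt [::] (lambda B r)).
Definition Mr := \max_(l : LQ B) size (rho B l).

Lemma optcatA (a b c : option (seq S)) : optcat a (optcat b c) = optcat (optcat a b) c.
Proof. by case: a => [a|]; case: b => [b|]; case: c => [c|] //=; rewrite catA. Qed.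

Lemma optcat_Some (p q : option (seq S)) x : optcat p q = Some x ->
  exists a b, p = Some a /\ q = Some b /\ x = a ++ b.
Proof. by case: p => [a|]; case: q => [b|] //= [<-]; exists a, b. Qed.

Lemma foldr_optcat_cat (s1 s2 : seq (option (seq S))) :
  foldr (@optcat S) (Some [::]) (s1 ++ s2) =
  optcat (foldr (@optcat S) (Some [::]) s1) (foldr (@optcat S) (Some [::]) s2).
Proof.
elim: s1 => [|a s1 IH] /=; first by case: (foldr _ _ s2).
by rewrite IH optcatA.
Qed.

Lemma fold_bound (g : nat -> option (seq S)) M s x :
  (forall i y, g i = Some y -> size y <= M) ->
  foldr (@optcat S) (Some [::]) (map g s) = Some x -> size x <= M * size s.
Proof.
move=> Hg; elim: s x => [|i s IH] x /=; first by case=> <-.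
move/optcat_Some=> [a [b [Ha [Hb ->]]]].
rewrite size_cat mulnS; apply: leq_add; [exact: Hg Ha | exact: IH].
Qed.

Lemma block_bound z i y : block B z i = Some y -> size y <= Mw.
Proof.
rewrite /block; case: (drop i z) => [|a rest] //.
case: (lrun _ _ _) => [l|] //; case: (rrun _ _ _) => [r|] // Ho.
have := leq_bigmax (F := fun t : (LQ B * S * RQ B)%type =>
   size (odflt [::] (omega B t.1.1 t.1.2 t.2))) (l, a, r).
by rewrite /= Ho.
Qed.

Lemma lambda_bound o y : obind (lambda B) o = Some y -> size y <= Ml.
Proof.
case: o => [r|] //= Ho.
have := leq_bigmax (F := fun r : RQ B => size (odflt [::] (lambda B r))) r.
by rewrite /= Ho.
Qed.

Lemma rho_bound o y : omap (rho B) o = Some y -> size y <= Mr.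
Proof.
case: o => [l|] //= [<-].
exact: (leq_bigmax (F := fun l : LQ B => size (rho B l)) l).
Qed.

Definition blocks z s := foldr (@optcat S) (Some [::]) (map (block B z) s).

Lemma bsem_split z n m : size z = n + m ->
  bsem B z = optcat (optcat (obind (lambda B) (rrun (dR B) (r0 B) z)) (blocks z (iota 0 n)))
    (optcat (foldr (@optcat S) (Some [::]) (map (fun j => block B z (n + j)) (iota 0 m)))
       (omap (rho B) (lrun (dL B) (l0 B) z))).
Proof.
move=> Hz; rewrite /bsem Hz iotaD add0n map_cat foldr_optcat_cat.
have ->: iota n m = map (addn n) (iota 0 m) by rewrite -iotaDl addn0.
by rewrite -map_comp -!optcatA.
Qed.

Lemma lrun_cat (Q T : Type) (d : Q -> T -> option Q) q0 u w :
  lrun d q0 (u ++ w) = foldl (fun oq a => obind (fun q => d q a) oq) (lrun d q0 u) w.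
Proof. by rewrite /lrun foldl_cat. Qed.

Lemma rrun_cat (Q T : Type) (d : Q -> T -> option Q) q0 w u :
  rrun d q0 (w ++ u) = foldr (fun a oq => obind (fun q => d q a) oq) (rrun d q0 u) w.
Proof. by rewrite /rrun foldr_cat. Qed.

Lemma left_equiv_eq (Q T : Type) (d : Q -> T -> option Q) q0 u v :
  left_equiv d q0 u v -> lrun d q0 u = lrun d q0 v.
Proof.
move=> H; case Eu: (lrun d q0 u) => [p|]; first by symmetry; apply/H.
by case Ev: (lrun d q0 v) => [p|] //; move/H: Ev; rewrite Eu.
Qed.

Lemma right_equiv_eq (Q T : Type) (d : Q -> T -> option Q) q0 u v :
  right_equiv d q0 u v -> rrun d q0 u = rrun d q0 v.
Proof.
move=> H; case Eu: (rrun d q0 u) => [p|]; first by symmetry; apply/H.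
by case Ev: (rrun d q0 v) => [p|] //; move/H: Ev; rewrite Eu.
Qed.

Lemma lcp_cat (T : eqType) (c a b : seq T) : size c <= lcp_len (c ++ a) (c ++ b).
Proof. by elim: c => [|x c IH] //=; rewrite eqxx. Qed.


Lemma arith1 a b c k : c <= k -> a + c + (b + c) - 2 * k <= a + b.
Proof. lia. Qed.
Lemma arith2 a b c k : c <= k -> c + a + (c + b) - 2 * k <= a + b.
Proof. lia. Qed.

Lemma rdist_bound (X Y C : seq S) : rdist (X ++ C) (Y ++ C) <= size X + size Y.
Proof.
rewrite /rdist /lcs_len !rev_cat.
have := @lcp_cat _ (rev C) (rev X) (rev Y); rewrite !size_rev !size_cat.
move: (lcp_len _ _) => k Hk; exact: arith1.
Qed.

Lemma ldist_bound (X Y C : seq S) : ldist (C ++ X) (C ++ Y) <= size X + size Y.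
Proof.
rewrite /ldist.
have := @lcp_cat _ C X Y; rewrite !size_cat.
move: (lcp_len _ _) => k Hk; exact: arith2.
Qed.

End Aux.
Arguments fold_bound {S g M s x}. Arguments rdist_bound {S}. Arguments ldist_bound {S}.
Arguments lambda_bound {S B o y}. Arguments rho_bound {S B o y}.

Theorem mainTheorem11 (S : finType) (B : bimachine S)
  (Htotal : forall u : seq S, bsem B u <> None) :
  refines (left_equiv (dL B) (l0 B)) (L0_equiv (bsem B)) /\
  refines (right_equiv (dR B) (r0 B)) (R0_equiv (bsem B)).
Proof.
split.
- move=> u v Huv; have Hl := @left_equiv_eq _ _ _ _ _ _ Huv; split; first by move=> w; split=> _; apply: Htotal.
  exists (Ml _ B + Mw _ B * size u + (Ml _ B + Mw _ B * size v)) => w x y.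
  rewrite (@bsem_split _ B (u ++ w) (size u) (size w)) ?size_cat //.
  rewrite (@bsem_split _ B (v ++ w) (size v) (size w)) ?size_cat //.
  have Eb : [seq block B (u ++ w) (size u + j) | j <- iota 0 (size w)] =
            [seq block B (v ++ w) (size v + j) | j <- iota 0 (size w)].
    apply: eq_map => j; rewrite /block !drop_cat !take_cat.
    rewrite !ltnNge !leq_addr /= !addKn !lrun_cat Hl //.
  rewrite Eb !lrun_cat Hl.
  move/optcat_Some=> [p1 [q [Hp1 [Hq ->]]]].
  move/optcat_Some=> [p2 [q' [Hp2 [Hq' ->]]]].
  move: Hq'; rewrite Hq => -[<-].
  apply: leq_trans (rdist_bound _ _ _) _; apply: leq_add.
    move/optcat_Some: Hp1 => [a [b [Ha [Hb ->]]]]; rewrite size_cat; apply: leq_add.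
      exact: lambda_bound Ha.
    by have := fold_bound (@block_bound _ B (u ++ w)) Hb; rewrite size_iota.
  move/optcat_Some: Hp2 => [a [b [Ha [Hb ->]]]]; rewrite size_cat; apply: leq_add.
    exact: lambda_bound Ha.
  by have := fold_bound (@block_bound _ B (v ++ w)) Hb; rewrite size_iota.
- move=> u v Huv; have Hr := @right_equiv_eq _ _ _ _ _ _ Huv; split; first by move=> w; split=> _; apply: Htotal.
  exists (Mw _ B * size u + Mr _ B + (Mw _ B * size v + Mr _ B)) => w x y.
  rewrite (@bsem_split _ B (w ++ u) (size w) (size u)) ?size_cat //.
  rewrite (@bsem_split _ B (w ++ v) (size w) (size v)) ?size_cat //.
  have Eb : blocks _ B (w ++ u) (iota 0 (size w)) = blocks _ B (w ++ v) (iota 0 (size w)).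
    rewrite /blocks; congr (foldr _ _ _); apply/eq_in_map => i; rewrite mem_iota /= add0n => Hi.
    rewrite /block !drop_cat !take_cat Hi.
    case E: (drop i w) => [|a rest] //=.
      by have := size_drop i w; rewrite E /=; move: Hi; clear; lia.
    by rewrite !rrun_cat Hr.
  rewrite Eb !rrun_cat Hr.
  move/optcat_Some=> [p [q1 [Hp [Hq1 ->]]]].
  move/optcat_Some=> [p' [q2 [Hp' [Hq2 ->]]]].
  move: Hp'; rewrite Hp => -[<-].
  apply: leq_trans (ldist_bound _ _ _) _; apply: leq_add.
    move/optcat_Some: Hq1 => [a [b [Ha [Hb ->]]]]; rewrite size_cat; apply: leq_add.
      by have := fold_bound (fun i y => @block_bound _ B (w ++ u) (size w + i) y) Ha;
         rewrite size_iota.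
    exact: rho_bound Hb.
  move/optcat_Some: Hq2 => [a [b [Ha [Hb ->]]]]; rewrite size_cat; apply: leq_add.
    by have := fold_bound (fun i y => @block_bound _ B (w ++ v) (size w + i) y) Ha;
       rewrite size_iota.
  exact: rho_bound Hb.
Qed.
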